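(* Let $\mathcal V$ be a finite set, $2\le k\le|\mathcal V|-2$, let $\Gamma\subset\binom{\mathcal V}{k}$ be a code and $G\le{\rm Aut}(\Gamma)\cap{\rm Sym}(\mathcal V)$. If $\Gamma$ is $G$-strongly incidence-transitive, then $\Gamma$ is $G$-incidence-transitive and $\delta(\Gamma)\ge2$.
   Context: The Johnson graph $J(|\mathcal V|,k)$ has vertex set $\binom{\mathcal V}{k}$, the $k$-subsets of $\mathcal V$, two being adjacent iff they meet in $k-1$ points; $d$ is graph distance. A code is a proper non-empty subset $\Gamma\subset\binom{\mathcal V}{k}$; $\delta(\Gamma)$ is the least distance between distinct codewords; the neighbour set $\Gamma_1$ is the set of $k$-subsets not in $\Gamma$ at distance $1$ from some codeword. ${\rm Aut}(\Gamma)$ is the setwise stabiliser of $\Gamma$ in ${\rm Aut}(J(|\mathcal V|,k))$. $\Gamma$ is $G$-incidence-transitive if $G$ is transitive on $\{(\gamma,\gamma_1)\in\Gamma\times\Gamma_1: d(\gamma,\gamma_1)=1\}$. $\Gamma$ is $G$-strongly incidence-transitive if $G$ is transitive on $\Gamma$ and, for $\gamma\in\Gamma$, $G_\gamma$ is transitive on $\gamma\times(\mathcal V\setminus\gamma)$. *)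

(* Defs.v *)
From mathcomp Require Import all_boot all_fingroup.
Set Implicit Arguments. Unset Strict Implicit. Unset Printing Implicit Defensive.

Section Johnson.
Variable V : finType.
Variable k : nat.

Definition ksubsets : {set {set V}} := [set A : {set V} | #|A| == k].

Definition jadj (A B : {set V}) : bool :=
  [&& #|A| == k, #|B| == k & #|A :&: B| == k.-1].

(* d(A,B) >= m in J(|V|,k): every walk from A to B has length >= m
   (graph distance, with d = infinity if there is no walk). *)
Definition jdist_ge (A B : {set V}) (m : nat) : Prop :=
  forall p : seq {set V}, path jadj A p -> last A p = B -> m <= size p.

Definition is_code (Gam : {set {set V}}) : Prop :=
  [/\ Gam \subset ksubsets, Gam != set0 & Gam != ksubsets].

Definition min_dist_ge (Gam : {set {set V}}) (m : nat) : Prop :=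
  forall g1 g2, g1 \in Gam -> g2 \in Gam -> g1 != g2 -> jdist_ge g1 g2 m.

Definition neighbours (Gam : {set {set V}}) : {set {set V}} :=
  [set B in ksubsets | (B \notin Gam) && [exists c in Gam, jadj c B]].

(* G is contained in Aut(Gamma) /\ Sym(V): each g in G (a permutation of V,
   acting on subsets by images) fixes Gamma setwise. *)
Definition stabilises_code (G : {set {perm V}}) (Gam : {set {set V}}) : Prop :=
  forall g, g \in G -> [set (fun x : V => g x) @: A | A : {set V} in Gam] = Gam.

Definition incidence_transitive (G : {set {perm V}}) (Gam : {set {set V}}) : Prop :=
  forall c c1 e e1,
    c \in Gam -> c1 \in neighbours Gam -> jadj c c1 ->
    e \in Gam -> e1 \in neighbours Gam -> jadj e e1 ->
    exists2 g, g \in G & ((fun x : V => g x) @: c = e /\ (fun x : V => g x) @: c1 = e1).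

Definition strongly_incidence_transitive (G : {set {perm V}}) (Gam : {set {set V}}) : Prop :=
  (forall c e, c \in Gam -> e \in Gam -> exists2 g, g \in G & (fun x : V => g x) @: c = e) /\
  (forall c, c \in Gam -> forall a b a' b',
     a \in c -> b \notin c -> a' \in c -> b' \notin c ->
     exists2 g, g \in G & [/\ (fun x : V => g x) @: c = c, g a = a' & g b = b']).

End Johnson.

(* Main.v *)
Require Import Defs.
From mathcomp Require Import all_boot all_fingroup.
From mathcomp Require Import zify.

Set Implicit Arguments. Unset Strict Implicit. Unset Printing Implicit Defensive.

Section Aux.
Variable V : finType.

Lemma adj_decomp k (A B : {set V}) : 1 <= k -> jadj k A B ->
  exists a b, [/\ a \in A, b \notin A & B = b |: (A :\ a)].
Proof.
move=> k1 /and3P[/eqP hA /eqP hB /eqP hI].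
have : #|A :\: B| == 1 by rewrite cardsD hA hI; apply/eqP; lia.
move/cards1P=> [a ha].
have : #|B :\: A| == 1 by rewrite cardsD hB setIC hI; apply/eqP; lia.
move/cards1P=> [b hb].
have aA : a \in A :\: B by rewrite ha set11.
have bB : b \in B :\: A by rewrite hb set11.
rewrite !inE in aA bB.
case/andP: aA => _ aA; case/andP: bB => bA _.
exists a, b; split => //.
apply/setP => x.
have HA : (x \in A :\: B) = (x \in [set a]) by rewrite ha.
have HB : (x \in B :\: A) = (x \in [set b]) by rewrite hb.
 rewrite !inE in HA HB *.
rewrite -HA -HB.
by case: (x \in A); case: (x \in B).
Qed.

Lemma img_swap (g : {perm V}) (A : {set V}) a b :
  [set g x | x in b |: (A :\ a)] = g b |: ([set g x | x in A] :\ g a).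
Proof.
rewrite imsetU1; congr (_ |: _); apply/setP => y; rewrite !inE.
apply/imsetP/andP.
- case=> x; rewrite !inE => /andP[xa xA] ->; split.
  + by rewrite (inj_eq perm_inj).
  + exact: imset_f.
- case=> ya /imsetP[x xA Hy]; exists x => //.
  rewrite !inE xA andbT; apply: contra ya => /eqP xa.
  by rewrite Hy xa.
Qed.

Lemma card_swap (A : {set V}) a b : a \in A -> b \notin A ->
  #|b |: (A :\ a)| = #|A|.
Proof.
move=> aA bA.
rewrite cardsU1 (cardsD1 a A) aA inE (negbTE bA) andbF /=; lia.
Qed.

Lemma connect_all (Gam : {set {set V}}) :
  (forall c a b, c \in Gam -> a \in c -> b \notin c -> b |: (c :\ a) \in Gam) ->
  forall (n : nat) (c B : {set V}), c \in Gam -> #|B| = #|c| -> #|B :\: c| = n -> B \in Gam.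
Proof.
move=> P; elim=> [|n IH] c B cG hBc hn.
  have sub : B \subset c by rewrite -setD_eq0 -cards_eq0 hn.
  have -> : B = c by apply/eqP; rewrite eqEcard sub hBc leqnn.
  exact: cG.
have : 0 < #|B :\: c| by rewrite hn.
case/card_gt0P => b; rewrite inE => /andP[bc bB].
have : 0 < #|c :\: B|.
  by rewrite cardsD -hBc setIC -(cardsD B c) hn.
case/card_gt0P => a; rewrite inE => /andP[aB ac].
apply: (IH (b |: (c :\ a))).
- exact: P.
- by rewrite card_swap.
- suff -> : B :\: (b |: (c :\ a)) = (B :\: c) :\ b.
    by rewrite (cardsD1 b (B :\: c)) inE bc bB in hn; case: hn.
  apply/setP => x; rewrite !inE.
  case: (x =P a) => [->|_]; first by rewrite (negbTE aB) !andbF.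
  by rewrite /=; case: (x == b); case: (x \in c).
Qed.

End Aux.

Theorem lemma2p1 (V : finType) (k : nat) (Gam : {set {set V}}) (G : {group {perm V}}) :
  2 <= k -> k + 2 <= #|V| ->
  is_code k Gam ->
  stabilises_code G Gam ->
  strongly_incidence_transitive G Gam ->
  incidence_transitive k G Gam /\ min_dist_ge k Gam 2.
Proof.
move=> k2 kV [Gsub Gne Gnall] Hstab [Htr Hloc].
have img : forall g A, g \in G -> A \in Gam -> [set g x | x in A] \in Gam.
  move=> g A gG AG; rewrite -(Hstab g gG); exact: imset_f.
have k1 : 1 <= k by lia.
split.
- move=> c c1 e e1 cG _ cc1 eG _ ee1.
  have [a [b [ac bc ->]]] := adj_decomp k1 cc1.
  have [a' [b' [ae be ->]]] := adj_decomp k1 ee1.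
  have [g0 g0G g0c] := Htr c e cG eG.
  have g0a : g0 a \in e by rewrite -g0c; exact: imset_f.
  have g0b : g0 b \notin e.
    by rewrite -g0c; apply/imsetP => -[x xc /perm_inj ebx]; rewrite ebx xc in bc.
  have [h hG [he ha hb]] := Hloc e eG _ _ _ _ g0a g0b ae be.
  exists (g0 * h)%g; first by rewrite groupM.
  have compE : forall A : {set V}, [set (g0 * h)%g x | x in A] = [set h x | x in [set g0 x | x in A]].
    move=> A; transitivity [set (h \o g0) x | x in A].
      by apply: eq_imset => x; rewrite permM.
    by rewrite (imset_comp h g0).
  rewrite !compE g0c he img_swap img_swap g0c he ha hb; split => //.
-
  have clos : (exists g1 g2, [/\ g1 \in Gam, g2 \in Gam, g1 != g2 & jadj k g1 g2]) ->
      False.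
    move=> [g1 [g2 [g1G g2G ne adj]]].
    have [a0 [b0 [a0g b0g g2E]]] := adj_decomp k1 adj.
    have P : forall c a b, c \in Gam -> a \in c -> b \notin c -> b |: (c :\ a) \in Gam.
      move=> c a b cG ac bc.
      have [g gG gc] := Htr g1 c g1G cG.
      have ga : g a0 \in c by rewrite -gc; exact: imset_f.
      have gb : g b0 \notin c.
        by rewrite -gc; apply/imsetP => -[x xc /perm_inj ebx]; rewrite ebx xc in b0g.
      have [h hG [hc ha hb]] := Hloc c cG _ _ _ _ ga gb ac bc.
      have := img h _ hG (img g _ gG g2G).
      by rewrite g2E !img_swap gc hc ha hb.
    have [c0 c0G] : exists c0, c0 \in Gam by apply/set0Pn.
    have c0k : #|c0| = k.
      by have := subsetP Gsub _ c0G; rewrite inE => /eqP.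
    move/negP: Gnall; apply; rewrite eqEsubset Gsub /=.
    apply/subsetP => B; rewrite inE => /eqP Bk.
    by apply: (connect_all P c0G _ (erefl _)); rewrite Bk c0k.
  move=> g1 g2 g1G g2G ne p.
  case: p => [|x [|y p]] //=.
  + by move=> _ eq; rewrite eq eqxx in ne.
  + rewrite andbT => adj eq; exfalso; apply: clos; exists g1, g2.
    by rewrite -eq; split => //; rewrite eq.
Qed.
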